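(* Let $\mathcal{B}$ be a prime Banach algebra over $\mathbb{R}$ or $\mathbb{C}$, and let $\mathcal{H}_1,\mathcal{H}_2$ be non-empty open subsets of $\mathcal{B}$. Suppose $\mathcal{B}$ admits a continuous generalized derivation $F$ associated with a derivation $d$ that is not injective, such that for every $(x,y)\in\mathcal{H}_1\times\mathcal{H}_2$ there exist positive integers $p=p(x,y)$, $q=q(x,y)$ with $$F(x^{p}y^{q})+x^{p}\circ y^{q}\in Z(\mathcal{B}).$$ Then $\mathcal{B}$ is commutative or $d(Z(\mathcal{B}))=\{0\}$.
   Context: $Z(\mathcal{B})$ denotes the center of $\mathcal{B}$. For $x,y\in\mathcal{B}$, $x\circ y=xy+yx$ and $[x,y]=xy-yx$. $\mathcal{B}$ is prime if $x\mathcal{B}y=\{0\}$ implies $x=0$ or $y=0$. A derivation is an additive map $d:\mathcal{B}\to\mathcal{B}$ with $d(xy)=d(x)y+xd(y)$ for all $x,y$. A generalized derivation associated with the derivation $d$ is an additive map $F:\mathcal{B}\to\mathcal{B}$ with $F(xy)=F(x)y+xd(y)$ for all $x,y\in\mathcal{B}$. *)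

(* Defs.v *)
From HB Require Import structures.
From mathcomp Require Import all_boot all_order all_algebra.
From mathcomp Require Import all_classical all_reals all_analysis.
Set Implicit Arguments. Unset Strict Implicit. Unset Printing Implicit Defensive.
Import Order.TTheory GRing.Theory Num.Theory.
Import numFieldNormedType.Exports.
Local Open Scope classical_set_scope.
Local Open Scope ring_scope.

Definition banach_algebra_mul (R : realType) (V : completeNormedModType R)
  (mul : V -> V -> V) : Prop :=
  (forall x y z, mul x (mul y z) = mul (mul x y) z) /\
      (forall x y z, mul (x + y) z = mul x z + mul y z) /\
      (forall x y z, mul x (y + z) = mul x y + mul x z) /\
      (forall (a : R) x y, mul (a *: x) y = a *: mul x y) /\
      (forall (a : R) x y, mul x (a *: y) = a *: mul x y) /\
      (forall x y, `|mul x y| <= `|x| * `|y|).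

Section AlgDefs.
Variables (V : zmodType) (mul : V -> V -> V).

Definition alg_center : set V := [set z | forall x, mul z x = mul x z].

Definition prime_alg : Prop :=
  forall x y, (forall b, mul (mul x b) y = 0) -> x = 0 \/ y = 0.

Definition jordan (x y : V) : V := mul x y + mul y x.

(* apow x n = x^n for n >= 1 (apow x 0 = x, never used) *)
Definition apow (x : V) (n : nat) : V := iter n.-1 (mul x) x.

Definition is_derivation (d : V -> V) : Prop :=
  (forall x y, d (x + y) = d x + d y) /\
  (forall x y, d (mul x y) = mul (d x) y + mul x (d y)).

Definition is_gen_derivation (F d : V -> V) : Prop :=
  (forall x y, F (x + y) = F x + F y) /\
  (forall x y, F (mul x y) = mul (F x) y + mul x (d y)).
End AlgDefs.

(* Main.v *)
Require Import Defs.
From HB Require Import structures.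
From mathcomp Require Import all_boot all_order all_algebra.
From mathcomp Require Import all_classical all_reals all_analysis.
From mathcomp Require Import ring lra.
Import Order.TTheory GRing.Theory Num.Theory.
Import numFieldNormedType.Exports.
Local Open Scope classical_set_scope.
Local Open Scope ring_scope.
Set Implicit Arguments. Unset Strict Implicit. Unset Printing Implicit Defensive.
Section ProdComplete.
Variables (R : realType) (V : completeNormedModType R).

Definition W := (V * V)%type.
HB.instance Definition _ := NormedModule.copy W (V * V)%type.

Lemma prod_ballE (a b : W) e : ball a e b <-> (ball a.1 e b.1 /\ ball a.2 e b.2).
Proof. by []. Qed.

Lemma prodVV_complete (F : set_system W) : ProperFilter F -> cauchy F -> cvg F.
Proof.
move=> PF /cauchyP cF.

have c1 : cvg (fst @ F).
  apply: cauchy_cvg; apply/cauchyP => e e0.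

  case: (cF e e0) => x Fx; exists x.1.
  suff : F (fst @^-1` ball x.1 e) by []. by apply: filterS Fx => y /prod_ballE [].
have c2 : cvg (snd @ F).
  apply: cauchy_cvg; apply/cauchyP => e e0.
  case: (cF e e0) => x Fx; exists x.2.
  suff : F (snd @^-1` ball x.2 e) by []. by apply: filterS Fx => y /prod_ballE [].
apply/cvg_ex; exists (lim (fst @ F), lim (snd @ F)).

apply/fcvg_ballP => e e0.
have h1 : F (fst @^-1` ball (lim (fst @ F)) e) by move/fcvg_ballP: c1 => /(_ e e0).
have h2 : F (snd @^-1` ball (lim (snd @ F)) e) by move/fcvg_ballP: c2 => /(_ e e0).
by apply: filterS (filterI h1 h2) => y [? ?]; apply/prod_ballE.
Qed.

HB.instance Definition _ := Uniform_isComplete.Build W prodVV_complete.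

End ProdComplete.

Section Alg.
Variables (R : realType) (V : completeNormedModType R) (mul : V -> V -> V).
Hypothesis BA : banach_algebra_mul mul.
Local Notation Zc := (alg_center mul).

Lemma mulA x y z : mul x (mul y z) = mul (mul x y) z. Proof. by case: BA. Qed.
Lemma mulDl x y z : mul (x + y) z = mul x z + mul y z. Proof. by case: BA => _ []. Qed.
Lemma mulDr x y z : mul x (y + z) = mul x y + mul x z. Proof. by case: BA => _ [_ []]. Qed.
Lemma mulZl (a : R) x y : mul (a *: x) y = a *: mul x y. Proof. by case: BA => _ [_ [_ []]]. Qed.
Lemma mulZr (a : R) x y : mul x (a *: y) = a *: mul x y. Proof. by case: BA => _ [_ [_ [_ []]]]. Qed.
Lemma mul_norm x y : `|mul x y| <= `|x| * `|y|. Proof. by case: BA => _ [_ [_ [_ [_ ]]]]. Qed.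

Lemma mul0l y : mul 0 y = 0.
Proof. by apply: (addrI (mul 0 y)); rewrite -mulDl !addr0. Qed.
Lemma mul0r y : mul y 0 = 0.
Proof. by apply: (addrI (mul y 0)); rewrite -mulDr !addr0. Qed.
Lemma mulNl x y : mul (- x) y = - mul x y.
Proof. by rewrite -scaleN1r mulZl scaleN1r. Qed.
Lemma mulNr x y : mul x (- y) = - mul x y.
Proof. by rewrite -scaleN1r mulZr scaleN1r. Qed.
Lemma mulBl x y z : mul (x - y) z = mul x z - mul y z.
Proof. by rewrite mulDl mulNl. Qed.
Lemma mulBr x y z : mul x (y - z) = mul x y - mul x z.
Proof. by rewrite mulDr mulNr. Qed.
Lemma mulnl x y n : mul (x *+ n) y = mul x y *+ n.
Proof. by rewrite -scaler_nat mulZl scaler_nat. Qed.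
Lemma mulnr x y n : mul x (y *+ n) = mul x y *+ n.
Proof. by rewrite -scaler_nat mulZr scaler_nat. Qed.

Lemma mul_suml (I : Type) (r : seq I) (P : pred I) (f : I -> V) y :
  mul (\sum_(i <- r | P i) f i) y = \sum_(i <- r | P i) mul (f i) y.
Proof. exact: (big_morph (fun a => mul a y) (fun a b => mulDl a b y) (mul0l y)). Qed.
Lemma mul_sumr (I : Type) (r : seq I) (P : pred I) (f : I -> V) y :
  mul y (\sum_(i <- r | P i) f i) = \sum_(i <- r | P i) mul y (f i).
Proof. exact: (big_morph (fun a => mul y a) (fun a b => mulDr y a b) (mul0r y)). Qed.

Lemma Zc0 : Zc 0. Proof. by move=> x; rewrite mul0l mul0r. Qed.
Lemma ZcD a b : Zc a -> Zc b -> Zc (a + b).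
Proof. by move=> Ha Hb x; rewrite mulDl mulDr Ha Hb. Qed.
Lemma ZcZ (k : R) a : Zc a -> Zc (k *: a).
Proof. by move=> Ha x; rewrite mulZl mulZr Ha. Qed.
Lemma ZcN a : Zc a -> Zc (- a).
Proof. by move=> Ha; rewrite -scaleN1r; apply: ZcZ. Qed.
Lemma ZcB a b : Zc a -> Zc b -> Zc (a - b).
Proof. by move=> Ha Hb; apply: ZcD => //; apply: ZcN. Qed.
Lemma ZcM a b : Zc a -> Zc b -> Zc (mul a b).
Proof. by move=> Ha Hb x; rewrite -mulA Hb mulA Ha -mulA. Qed.

Lemma iter_mulz z k w : iter k.+1 (mul z) w = mul z (iter k (mul z) w).
Proof. by []. Qed.

Lemma iter_mulr z k w Y : mul (iter k (mul z) w) Y = iter k (mul z) (mul w Y).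
Proof. by elim: k => [//|k IH]; rewrite !iter_mulz -mulA IH. Qed.

Lemma iter_mulx z k x : Zc z -> mul x (iter k (mul z) z) = iter k.+1 (mul z) x.
Proof.
move=> Hz; elim: k => [|k IH]; first by rewrite /= Hz.
by rewrite iter_mulz mulA -Hz -mulA IH.
Qed.

Lemma apowS x n : (0 < n)%N -> apow mul x n.+1 = mul x (apow mul x n).
Proof. by case: n. Qed.

Lemma closed_approx (S : set V) :
  (forall z, (forall e, 0 < e -> exists w, S w /\ `|z - w| < e) -> S z) -> closed S.
Proof.
move=> HS z Hz; apply: HS => e e0.
have : nbhs z (ball z e) by apply: nbhsx_ballx.
move=> /Hz [w [Sw bw]]; exists w; split => //.
by move: bw; rewrite -ball_normE.
Qed.

Lemma Zc_closed : closed Zc.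
Proof.
apply: closed_approx => z Hz x.
apply/eqP; rewrite -subr_eq0; apply/eqP/normr0_eq0.
apply/eqP; rewrite eq_le normr_ge0 andbT.
apply/ler_addgt0Pr => e e0; rewrite add0r.
have k0 : 0 < e / (2 * `|x| + 1) by rewrite divr_gt0 // ltr_wpDl // mulr_ge0.
have [w [Sw hw]] := Hz _ k0.
have -> : mul z x - mul x z = (mul (z - w) x - mul x (z - w)) by rewrite mulBl mulBr Sw; rewrite opprB addrA subrK.
apply: (le_trans (ler_normB _ _)).
apply: (le_trans (lerD (mul_norm _ _) (mul_norm _ _))).
have h2 : `|z - w| * (2 * `|x| + 1) < e.
  by rewrite -ltr_pdivlMr // ltr_wpDl // mulr_ge0.
have h3 := normr_ge0 (z - w); have h4 := normr_ge0 x.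
nra.
Qed.

End Alg.

Section Alg2.
Variables (R : realType) (V : completeNormedModType R) (mul : V -> V -> V).
Hypothesis BA : banach_algebra_mul mul.
Hypothesis PR : prime_alg mul.
Local Notation Zc := (alg_center mul).

Lemma zc_annih c w : Zc c -> c <> 0 -> mul w c = 0 -> w = 0.
Proof.
move=> Hc c0 wc.
have : forall b, mul (mul w b) c = 0.
  by move=> b; rewrite -(mulA BA) -Hc (mulA BA) wc (mul0l BA).
by move/PR => [].
Qed.

Lemma zc_cent c w : Zc c -> c <> 0 -> Zc (mul w c) -> Zc w.
Proof.
move=> Hc c0 Hwc x; apply/eqP; rewrite -subr_eq0; apply/eqP.
apply: (zc_annih Hc c0).
rewrite (mulBl BA) -(mulA BA) -Hc (mulA BA) -(mulA BA x) -Hwc subrr //.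
Qed.

Lemma zc_cent_l c w : Zc c -> c <> 0 -> Zc (mul c w) -> Zc w.
Proof. by move=> Hc c0; rewrite Hc; apply: zc_cent. Qed.

Lemma iter_zc z k : Zc z -> z <> 0 -> Zc (iter k (mul z) z) /\ iter k (mul z) z <> 0.
Proof.
move=> Hz z0; elim: k => [//|k [IH1 IH2]]; split.
  by rewrite iter_mulz; apply: (ZcM BA).
rewrite iter_mulz => H; apply: IH2; apply: (zc_annih Hz z0).
by rewrite IH1.
Qed.

Lemma apow_zc z n : Zc z -> z <> 0 -> Zc (apow mul z n) /\ apow mul z n <> 0.
Proof. by move=> Hz z0; apply: iter_zc. Qed.

Lemma iter_cent z k w : Zc z -> z <> 0 -> Zc (iter k (mul z) w) -> Zc w.
Proof.
move=> Hz z0; elim: k => [//|k IH]; rewrite iter_mulz => H.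
by apply: IH; apply: (zc_cent_l Hz z0).
Qed.

Lemma mul_cvg {T : Type} (G : set_system T) {FG : Filter G} (f g : T -> V) a b :
  f @ G --> a -> g @ G --> b -> (fun t => mul (f t) (g t)) @ G --> mul a b.
Proof.
move=> fa gb; apply/cvgrPdist_lt => e e0.
have k1 : 0 < Num.min 1 (e / 2 / (`|b| + 1)).
  by rewrite lt_min ltr01 /= !divr_gt0 // ltr_wpDl.
have k2 : 0 < e / 2 / (`|a| + 1) by rewrite !divr_gt0 // ltr_wpDl.
move/cvgrPdist_lt: fa => /(_ _ k1) H1.
move/cvgrPdist_lt: gb => /(_ _ k2) H2.
apply: filterS2 H1 H2 => t h1 h2.
have -> : mul a b - mul (f t) (g t) = mul (a - f t) b + mul (f t) (b - g t).
  by rewrite (mulBl BA) (mulBr BA) addrA subrK.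
move: h1; rewrite lt_min => /andP [h1 h1'].
have hft : `|f t| <= `|a| + 1.
  have -> : f t = a - (a - f t) by rewrite opprB addrC subrK.
  by apply: (le_trans (ler_normB _ _)); rewrite lerD2l ltW.
have t1 : `|mul (a - f t) b| <= e / 2.
  apply: (le_trans (mul_norm BA _ _)).
  have -> : e / 2 = e / 2 / (`|b| + 1) * (`|b| + 1) by rewrite divfK // gt_eqF // ltr_wpDl.
  by apply: ler_pM => //; [exact: ltW | rewrite lerDl].
have t2 : `|mul (f t) (b - g t)| < e / 2.
  apply: (le_lt_trans (mul_norm BA _ _)).
  apply: (@le_lt_trans _ _ ((`|a| + 1) * `|b - g t|)).
    by apply: ler_wpM2r.
  rewrite -ltr_pdivlMl ?ltr_wpDl // mulrC //.
apply: (le_lt_trans (ler_normD _ _)).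
rewrite (splitr e); apply: ler_ltD => //.

Qed.

Definition pv (n : nat) (c : nat -> V) (t : R) : V := \sum_(k < n.+1) t ^+ k *: c k.

Lemma pvS n c t : pv n.+1 c t = c 0%N + t *: pv n (fun i => c i.+1) t.
Proof.
rewrite /pv big_ord_recl expr0 scale1r scaler_sumr; congr (_ + _).
by apply: eq_bigr => i _; rewrite lift0 exprS scalerA.
Qed.

Lemma pv_norm n c t : 0 <= t <= 1 -> `|pv n c t| <= \sum_(k < n.+1) `|c k|.
Proof.
move=> /andP [t0 t1]; apply: (le_trans (ler_norm_sum _ _ _)).
apply: ler_sum => i _; rewrite normrZ normrX ger0_norm //.
by rewrite ler_piMl // exprn_ile1.
Qed.

Lemma poly_coef (S : set V) :
  (forall z, (forall e, 0 < e -> exists w, S w /\ `|z - w| < e) -> S z) ->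
  S 0 -> (forall a b, S a -> S b -> S (a - b)) ->
  forall n c N, (forall m, (N <= m)%N -> S (pv n c (m.+1%:R)^-1)) ->
  forall k, (k <= n)%N -> S (c k).
Proof.
move=> Scl S0 SB.
have SN a : S a -> S (- a) by move=> Sa; rewrite -sub0r; apply: SB.
have SD a b : S a -> S b -> S (a + b).
  by move=> Sa Sb; rewrite -(opprK b); apply: SB => //; apply: SN.
have Sn a m : S a -> S (a *+ m).
  by move=> Sa; elim: m => [|m IH]; rewrite ?mulr0n // mulrS; apply: SD.
elim=> [|n IH] c N HP k.
  rewrite leqn0 => /eqP ->; have := HP N (leqnn N).
  by rewrite /pv big_ord1 expr0 scale1r.
have c0 : S (c 0%N).
  apply: Scl => e e0.
  set M := \sum_(i < n.+1) `|c i.+1|.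
  have M0 : 0 <= M by apply: sumr_ge0 => i _.
  pose m := (N + Num.truncn (M / e))%N.
  exists (pv n.+1 c (m.+1%:R)^-1); split; first by apply: HP; rewrite leq_addr.
  rewrite pvS opprD addrA subrr sub0r normrN normrZ.
  have tpos : 0 < (m.+1%:R : R)^-1 by rewrite invr_gt0 ltr0Sn.
  rewrite gtr0_norm //.
  apply: (@le_lt_trans _ _ ((m.+1%:R)^-1 * M)).
    apply: ler_wpM2l; first exact: ltW.
    apply: pv_norm; rewrite ltW //= invf_le1 // ?ltr0Sn //.
    by rewrite ler1n.
  rewrite mulrC ltr_pdivrMr ?ltr0Sn // -ltr_pdivrMl //.
  apply: (lt_le_trans (truncnS_gt _)).
  by rewrite ler_nat ltnS /m mulrC leq_addl.
case: k => [|k] Hk; first exact: c0.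
apply: (IH (fun i => c i.+1) N) => // m Hm.
have := SB _ _ (HP m Hm) c0; rewrite pvS addrC addKr => H.
have -> : pv n (fun i => c i.+1) (m.+1%:R)^-1 =
   ((m.+1%:R)^-1 *: pv n (fun i => c i.+1) (m.+1%:R)^-1) *+ m.+1.
  by rewrite -scaler_nat scalerA mulfV ?scale1r // pnatr_eq0.
exact: Sn.
Qed.

End Alg2.

Section Expand.
Variables (R : realType) (V : completeNormedModType R) (mul : V -> V -> V).
Hypothesis BA : banach_algebra_mul mul.
Local Notation Zc := (alg_center mul).
Local Notation pv := (@pv R V).

Definition cstep (a b : V) (n : nat) (c : nat -> V) (k : nat) : V :=
  (if (k <= n)%N then mul a (c k) else 0) + (if k is k'.+1 then mul b (c k') else 0).

Fixpoint ccf (a b : V) (m : nat) : nat -> V :=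
  if m is m'.+1 then cstep a b m'.+1 (ccf a b m')
  else (fun k => if k == 0%N then a else if k == 1%N then b else 0).

Lemma pv_mull n c t Y : mul (pv n c t) Y = pv n (fun k => mul (c k) Y) t.
Proof. rewrite /pv (mul_suml BA); apply: eq_bigr => i _; exact: mulZl. Qed.
Lemma pv_mulr n c t Y : mul Y (pv n c t) = pv n (fun k => mul Y (c k)) t.
Proof. rewrite /pv (mul_sumr BA); apply: eq_bigr => i _; exact: mulZr. Qed.
Lemma pv_add n c c' t : pv n c t + pv n c' t = pv n (fun k => c k + c' k) t.
Proof. by rewrite /pv -big_split; apply: eq_bigr => i _; rewrite scalerDr. Qed.

Lemma ccfE a b m t : apow mul (a + t *: b) m.+1 = pv m.+1 (ccf a b m) t.
Proof.
elim: m => [|m IH].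
  by rewrite /pv /= big_ord_recr big_ord1 /= expr0 scale1r expr1.
rewrite apowS // IH /pv /= /cstep.
under [RHS]eq_bigr do rewrite scalerDr.
rewrite big_split /= [X in _ = X + _]big_ord_recr [X in _ = _ + X]big_ord_recl /= ltnn scaler0 addr0 scaler0 add0r.
rewrite (mulDl BA) (mul_sumr BA) (mul_sumr BA); congr (_ + _).
  apply: eq_bigr => i _; rewrite ifT; first exact: mulZr.
  by rewrite -ltnS ltn_ord.
apply: eq_bigr => i _.
by rewrite (mulZl BA) (mulZr BA) scalerA /bump /= add1n exprS.
Qed.

Lemma ccf_E1_0 z a m : ccf a (mul z a) m 0 = apow mul a m.+1.
Proof.
elim: m => [//|m IH].
by rewrite /= /cstep /= IH addr0 -apowS.
Qed.

Lemma ccf_E1_1 z a m : Zc z -> ccf a (mul z a) m 1 = m.+1%:R *: mul z (apow mul a m.+1).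
Proof.
move=> Hz; elim: m => [|m IH]; first by rewrite /= scale1r.
have -> : apow mul a m.+2 = mul a (apow mul a m.+1) by [].
rewrite /= /cstep /= IH ccf_E1_0 (mulZr BA).
have -> : mul a (mul z (apow mul a m.+1)) = mul z (mul a (apow mul a m.+1)).
  by rewrite (mulA BA) -Hz -(mulA BA).
by rewrite -(mulA BA) -[X in _ + X]scale1r -scalerDl natr1.
Qed.

Lemma ccf_E2_top z x m : ccf x z m m.+1 = apow mul z m.+1.
Proof.
elim: m => [//|m IH].
by rewrite /= /cstep ltnn add0r IH.
Qed.

Lemma ccf_E2_sub z x m : Zc z -> ccf x z m m = m.+1%:R *: iter m (mul z) x.
Proof.
move=> Hz; elim: m => [|m IH]; first by rewrite /= scale1r.
rewrite /= /cstep leqnn IH ccf_E2_top (mulZr BA) /apow /= (iter_mulx BA) //.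
by rewrite -[X in X + _]scale1r -scalerDl addrC natr1.
Qed.

End Expand.

Section Normed.
Variables (R : realType) (V : completeNormedModType R).

Lemma near_ball (x0 x v : V) (e : R) : ball x0 e x ->
  exists N, forall m, (N <= m)%N -> ball x0 e (x + (m.+1%:R)^-1 *: v).
Proof.
rewrite -ball_normE /ball_ /= => h.
set de := e - `|x0 - x|.
have de0 : 0 < de by rewrite subr_gt0.
exists (Num.truncn (`|v| / de)) => m Hm /=.
have hv : `|v| / de < m.+1%:R.
  by apply: (lt_le_trans (truncnS_gt _)); rewrite ler_nat ltnS.
have hv' : (m.+1%:R)^-1 * `|v| < de.
  by rewrite mulrC ltr_pdivrMr ?ltr0Sn // mulrC -ltr_pdivrMr.
rewrite opprD addrA; apply: (le_lt_trans (ler_normB _ _)).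
rewrite normrZ gtr0_norm ?invr_gt0 ?ltr0Sn //.
by move: hv'; rewrite /de ltrBrDl.
Qed.

Lemma approx_of_closed (S : set V) : closed S ->
  forall z, (forall e, 0 < e -> exists w, S w /\ `|z - w| < e) -> S z.
Proof.
move=> cS z Hz; apply: cS => B /nbhs_ballP [e e0 sB].
have [w [Sw hw]] := Hz e e0; exists w; split => //; apply: sB.
by rewrite -ball_normE.
Qed.

Lemma approx0 : forall z : V, (forall e, 0 < e -> exists w, [set 0] w /\ `|z - w| < e) -> [set 0] z.
Proof.
move=> z Hz; apply/normr0_eq0/eqP; rewrite eq_le normr_ge0 andbT.
apply/ler_addgt0Pr => e e0; rewrite add0r.
have [w [/= -> hw]] := Hz e e0; move: hw; rewrite subr0; exact: ltW.
Qed.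

End Normed.

Section Deriv.
Variables (R : realType) (V : completeNormedModType R) (mul : V -> V -> V) (F d : V -> V).
Hypothesis BA : banach_algebra_mul mul.
Hypothesis PR : prime_alg mul.
Hypothesis HD : is_derivation mul d.
Hypothesis HF : is_gen_derivation mul F d.
Local Notation Zc := (alg_center mul).
Local Notation pv := (@pv R V).

Lemma FD x y : F (x + y) = F x + F y. Proof. by case: HF. Qed.
Lemma FM x y : F (mul x y) = mul (F x) y + mul x (d y). Proof. by case: HF. Qed.
Lemma F0 : F 0 = 0. Proof. by apply: (addrI (F 0)); rewrite -FD !addr0. Qed.
Lemma d0 : d 0 = 0.
Proof. by apply: (addrI (d 0)); case: HD => HDa _; rewrite -HDa !addr0. Qed.
Lemma F_nat w n : F (w *+ n) = F w *+ n.
Proof. by elim: n => [|n IH]; rewrite ?mulr0n ?F0 // !mulrS FD IH. Qed.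
Lemma F_natZ w n : F (n%:R *: w) = n%:R *: F w.
Proof. by rewrite !scaler_nat F_nat. Qed.
Lemma F_sum (I : Type) (r : seq I) (P : pred I) (f : I -> V) :
  F (\sum_(i <- r | P i) f i) = \sum_(i <- r | P i) F (f i).
Proof. exact: (big_morph F FD F0). Qed.
Lemma F_inv w N : (0 < N)%N -> F ((N%:R)^-1 *: w) = (N%:R)^-1 *: F w.
Proof.
move=> N0; have Nn : (N%:R : R) != 0 by rewrite pnatr_eq0 -lt0n.
have -> : F w = N%:R *: F ((N%:R)^-1 *: w) by rewrite -F_natZ scalerA mulfV // scale1r.
by rewrite scalerA mulVf // scale1r.
Qed.
Lemma F_pv n c m : F (pv n c (m.+1%:R)^-1) = pv n (fun k => F (c k)) (m.+1%:R)^-1.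
Proof.
rewrite /pv F_sum; apply: eq_bigr => i _.
by rewrite exprVn -natrX F_inv // expn_gt0.
Qed.

Lemma dZ z : Zc z -> Zc (d z).
Proof.
move=> Hz x; case: HD => _ HDm.
have h1 := HDm z x; have h2 := HDm x z.
rewrite (Hz x) h2 (Hz (d x)) in h1.
by apply: (addIr (mul (d x) z)); rewrite -h1 addrC.
Qed.

Lemma Zc_unscale (k : R) w : k != 0 -> Zc (k *: w) -> Zc w.
Proof.
by move=> k0 H; have := ZcZ BA k^-1 H; rewrite scalerA mulVf // scale1r.
Qed.

Definition G p q x y :=
  F (mul (apow mul x p) (apow mul y q)) + jordan mul (apow mul x p) (apow mul y q).

Lemma Zc_approx : forall z, (forall e, 0 < e -> exists w, Zc w /\ `|z - w| < e) -> Zc z.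
Proof. exact: approx_of_closed (Zc_closed BA). Qed.

Lemma stepA x0 y0 e p q z : (0 < p)%N -> Zc z -> d z <> 0 ->
  (forall x y, ball x0 e x -> ball y0 e y -> Zc (G p q x y)) ->
  forall x y, ball x0 e x -> ball y0 e y -> Zc (mul (apow mul x p) (apow mul y q)).
Proof.
move=> p0 Hz dz0 HG x y bx bY.
case: p p0 HG => // p' _ HG.
set X := apow mul x p'.+1; set Y := apow mul y q; set u := mul X Y.
have [N HN] := near_ball (mul z x) bx.
pose ee k := F (mul (ccf mul x (mul z x) p' k) Y) + jordan mul (ccf mul x (mul z x) p' k) Y.
have He : forall m, (N <= m)%N -> Zc (pv p'.+1 ee (m.+1%:R)^-1).
  move=> m Hm; have := HG _ _ (HN m Hm) bY.
  rewrite /G (ccfE BA) /ee /jordan (pv_mull BA) (pv_mulr BA) F_pv pv_add pv_add.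
  done.
have H1 := poly_coef Zc_approx (Zc0 BA) (ZcB BA) He (isT : (1 <= p'.+1)%N).
rewrite /ee (ccf_E1_1 BA) // -/X in H1.
have HGxy := HG _ _ bx bY.
have E : F (mul (p'.+1%:R *: mul z X) Y) + jordan mul (p'.+1%:R *: mul z X) Y
       = p'.+1%:R *: (mul u (d z) + mul z (G p'.+1 q x y)).
  rewrite /G -/X -/Y -/u /jordan (mulZl BA) (mulZr BA) F_natZ -(mulA BA) -/u.
  rewrite (Hz u) FM -!scalerDr; congr (_ *: _).
  rewrite !(mulDr BA) (Hz (F u)) (Hz u) (mulA BA Y z X) -(Hz Y) -(mulA BA z Y X).
  by rewrite [RHS]addrCA addrA.
rewrite E in H1.
have k0 : (p'.+1%:R : R) != 0 by rewrite pnatr_eq0.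
have H2 := Zc_unscale k0 H1.
have H3 : Zc (mul u (d z)).
  by have := ZcB BA H2 (ZcM BA Hz HGxy); rewrite addrK.
exact: (zc_cent BA PR (dZ Hz) dz0 H3).
Qed.

End Deriv.

Section Main2.
Variables (R : realType) (V : completeNormedModType R) (mul : V -> V -> V) (F d : V -> V).
Hypothesis BA : banach_algebra_mul mul.
Hypothesis PR : prime_alg mul.
Hypothesis HD : is_derivation mul d.
Hypothesis HF : is_gen_derivation mul F d.
Local Notation Zc := (alg_center mul).
Local Notation pv := (@pv R V).

Lemma stepB x0 y0 e p q z : (0 < p)%N -> 0 < e -> Zc z -> z <> 0 ->
  (forall x y, ball x0 e x -> ball y0 e y -> Zc (mul (apow mul x p) (apow mul y q))) ->
  forall y, ball y0 e y -> Zc (apow mul y q) /\ forall b, Zc (mul b (apow mul y q)).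
Proof.
move=> p0 e0 Hz z0 HA y bY.
case: p p0 HA => // p' _ HA.
set Y := apow mul y q.
have part : forall x, ball x0 e x -> Zc Y /\ Zc (mul x Y).
  move=> x bx.
  have [N HN] := near_ball z bx.
  have He : forall m, (N <= m)%N ->
      Zc (pv p'.+1 (fun k => mul (ccf mul x z p' k) Y) (m.+1%:R)^-1).
    by move=> m Hm; have := HA _ _ (HN m Hm) bY; rewrite (ccfE BA) (pv_mull BA).
  have Ctop := poly_coef (Zc_approx BA) (Zc0 BA) (ZcB BA) He (leqnn p'.+1).
  have Csub := poly_coef (Zc_approx BA) (Zc0 BA) (ZcB BA) He (leqnSn p').
  rewrite /= ccf_E2_top in Ctop.
  rewrite /= (ccf_E2_sub BA) // (mulZl BA) (iter_mulr BA) in Csub.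
  have [zpc zp0] := apow_zc BA PR p'.+1 Hz z0.
  split; first exact: (zc_cent_l BA PR zpc zp0 Ctop).
  apply: (iter_cent BA PR (k := p') Hz z0).
  by apply: (Zc_unscale BA (k := p'.+1%:R)) => //; rewrite pnatr_eq0.
have [HY _] := part x0 (ballxx x0 e0).
split => // b.
have [N HN] := near_ball b (ballxx x0 e0).
have [_ h1] := part _ (HN N (leqnn N)).
have [_ h2] := part _ (ballxx x0 e0).
have := ZcB BA h1 h2; rewrite (mulDl BA) addrC addKr (mulZl BA) => h3.
by apply: (Zc_unscale BA _ h3); rewrite invr_eq0 pnatr_eq0.
Qed.

Lemma comm_of Y : Zc Y -> Y <> 0 -> (forall b, Zc (mul b Y)) ->
  forall a b, mul a b = mul b a.
Proof.
move=> HY Y0 HbY a b; apply/eqP; rewrite -subr_eq0; apply/eqP.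
apply: (zc_annih BA PR HY Y0).
by rewrite (mulBl BA) -!(mulA BA) -(HbY a b) -(mulA BA) (HY b) subrr.
Qed.

Lemma stepD y0 e q z : (0 < q)%N -> 0 < e -> Zc z -> z <> 0 ->
  exists y, ball y0 e y /\ apow mul y q <> 0.
Proof.
move=> q0 e0 Hz z0; apply: contrapT => Hn.
have Hall : forall y, ball y0 e y -> apow mul y q = 0.
  move=> y bY; apply: contrapT => hy; apply: Hn; by exists y.
clear Hn; case: q q0 Hall => // q' _ Hall.
have [N HN] := near_ball z (ballxx y0 e0).
have He : forall m, (N <= m)%N -> [set 0] (pv q'.+1 (ccf mul y0 z q') (m.+1%:R)^-1).
  by move=> m Hm; rewrite /= -(ccfE BA) Hall //; apply: HN.
have := poly_coef (@approx0 R V) (erefl _) _ He (leqnn q'.+1).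
rewrite /= ccf_E2_top => h.
have [_ zq] := apow_zc BA PR q'.+1 Hz z0.
by apply: zq; apply: h => a b /= -> ->; rewrite subrr.
Qed.

Lemma main_alg x0 y0 e p q z : 0 < e -> (0 < p)%N -> (0 < q)%N -> Zc z -> d z <> 0 ->
  (forall x y, ball x0 e x -> ball y0 e y -> Zc (G mul F p q x y)) ->
  forall a b, mul a b = mul b a.
Proof.
move=> e0 p0 q0 Hz dz0 HG.
have z0 : z <> 0 by move=> z0; apply: dz0; rewrite z0 (d0 HD).
have HA := stepA BA PR HD HF p0 Hz dz0 HG.
have [y [bY Y0]] := stepD y0 q0 e0 Hz z0.
have [HY HbY] := stepB p0 e0 Hz z0 HA bY.
exact: (comm_of HY Y0 HbY).
Qed.

End Main2.

Section BaireSec.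
Variables (R : realType) (V : completeNormedModType R).
Local Notation WW := (@W R V).

Lemma cont_fst : continuous (fun w : WW => w.1).
Proof.
move=> w; apply/cvg_ballP => e e0.
exists (ball w.1 e, ball w.2 e); first by split; apply: nbhsx_ballx.
by move=> [a b] [/= ha hb].
Qed.
Lemma cont_snd : continuous (fun w : WW => w.2).
Proof.
move=> w; apply/cvg_ballP => e e0.
exists (ball w.1 e, ball w.2 e); first by split; apply: nbhsx_ballx.
by move=> [a b] [/= ha hb].
Qed.

Lemma baire_step (S : set V) (Gf : nat -> nat -> V -> V -> V) (H1 H2 : set V) :
  closed S ->
  (forall p q, continuous (fun w : WW => Gf p q w.1 w.2)) ->
  open H1 -> open H2 -> H1 !=set0 -> H2 !=set0 ->
  (forall x y, H1 x -> H2 y -> exists p q : nat, (0 < p)%N /\ (0 < q)%N /\ S (Gf p q x y)) ->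
  exists x0 y0 (e : R) p q, 0 < e /\ (0 < p)%N /\ (0 < q)%N /\
    forall x y, ball x0 e x -> ball y0 e y -> S (Gf p q x y).
Proof.
move=> cS cG oH1 oH2 [x1 Hx1] [y1 Hy1] Hcov.
have [r1 r10 s1] : exists2 r : R, 0 < r & ball x1 r `<=` H1.
  by move: oH1; rewrite openE => /(_ _ Hx1) h; have := (@nbhs_ballP R V x1 H1).1 h.
have [r2 r20 s2] : exists2 r : R, 0 < r & ball y1 r `<=` H2.
  by move: oH2; rewrite openE => /(_ _ Hy1) h; have := (@nbhs_ballP R V y1 H2).1 h.
pose r := Num.min r1 r2.
have r0 : 0 < r by rewrite lt_min r10 r20.
pose w1 : WW := (x1, y1).
pose Hs : set WW := ball w1 r.
have Hs_sub : forall w, Hs w -> H1 w.1 /\ H2 w.2.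
  move=> w /prod_ballE [b1 b2]; split.
    by apply: s1; apply: le_ball b1; rewrite ge_min lexx.
  by apply: s2; apply: le_ball b2; rewrite ge_min lexx orbT.
pose C (n : nat) : set WW :=
  if unpickle n is Some pq then
    (if (0 < pq.1)%N && (0 < pq.2)%N then (fun w : WW => Gf pq.1 pq.2 w.1 w.2) @^-1` S
     else set0)
  else set0.
have Cc : forall n, closed (C n).
  move=> n; rewrite /C; case: (unpickle n) => [[p q]|]; last exact: closed0.
  case: ifP => _; last exact: closed0.
  by apply: preimage_closed => // w _; apply: cG.
pose O n : set WW := ~` C n `|` ~` closure Hs.
have Oo : forall n, open (O n).
  by move=> n; apply: openU; rewrite openC; [exact: Cc | exact: closed_closure].
have Hs0 : Hs !=set0 by exists w1; apply: ballxx.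
have oHs : open Hs by exact: ball_open.
case: (pselect (forall n, dense (O n))) => [Hd | Hnd].
  exfalso.
  have := @Baire R WW O (fun i => conj (Oo i) (Hd i)) Hs Hs0 oHs.
  move=> [w [Hsw HOw]].
  have [h1 h2] := Hs_sub w Hsw.
  have [p [q [p0 [q0 Sw]]]] := Hcov _ _ h1 h2.
  case: (HOw (pickle (p, q)) I) => [nC | ncl].
    by apply: nC; rewrite /C pickleK /= p0 q0.
  by apply: ncl; exact: subset_closure.
have [n nd] : exists n, ~ dense (O n).
  apply: contrapT => h; apply: Hnd => n; apply: contrapT => hn; apply: h; by exists n.
have [A [[a [oA Aa]] AO]] := denseNE nd.
have AC : forall v, A v -> C n v /\ closure Hs v.
  move=> v Av; have nOv : ~ O n v.
    by move=> Ov; have : (A `&` O n) v by []; rewrite AO.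
  split; apply: contrapT => h; apply: nOv; [by left | by right].
have [_ cla] := AC a Aa.
have [w [Hsw Aw]] := cla A (open_nbhs_nbhs (conj oA Aa)).
have : nbhs w (Hs `&` A).
  by apply: open_nbhs_nbhs; split => //; apply: openI.
move=> /nbhs_ballP [de de0 sde].
have Cball : forall v, ball w de v -> C n v.
  by move=> v bv; have [] := AC v (sde v bv).2.
move: Cball; rewrite /C; case: (unpickle n) => [[p q]|] Cball; last first.
  by have := Cball w (ballxx w de0).
move: Cball; case: ifP => [/andP [p0 q0] | _] Cball; last first.
  by have := Cball w (ballxx w de0).
exists w.1, w.2, de, p, q; split => //; split => //; split => // x y bx bY.
by have := Cball ((x, y) : WW); apply; apply/prod_ballE.
Qed.

End BaireSec.

Section Cont.
Variables (R : realType) (V : completeNormedModType R) (mul : V -> V -> V) (F : V -> V).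
Hypothesis BA : banach_algebra_mul mul.

Lemma cont_mul {T : topologicalType} (f g : T -> V) :
  continuous f -> continuous g -> continuous (fun t => mul (f t) (g t)).
Proof. by move=> cf cg t; apply: (mul_cvg BA (cf t) (cg t)). Qed.

Lemma cont_apow {T : topologicalType} (f : T -> V) n :
  continuous f -> continuous (fun t => apow mul (f t) n).
Proof.
move=> cf; rewrite /apow; elim: n.-1 => [//|k IH] /=.
exact: cont_mul.
Qed.

Lemma cont_add {T : topologicalType} (f g : T -> V) :
  continuous f -> continuous g -> continuous (fun t => f t + g t).
Proof. by move=> cf cg t; apply: cvgD; [exact: cf | exact: cg]. Qed.

Lemma cont_G p q : continuous F -> continuous (fun w : @W R V => G mul F p q w.1 w.2).
Proof.
move=> cF; rewrite /G /jordan.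
have c1 : continuous (fun w : @W R V => apow mul w.1 p) by apply: cont_apow; exact: cont_fst.
have c2 : continuous (fun w : @W R V => apow mul w.2 q) by apply: cont_apow; exact: cont_snd.
have c12 := cont_mul c1 c2.
have c21 := cont_mul c2 c1.
apply: cont_add; last exact: cont_add.
move=> w; exact: (continuous_comp (c12 w) (cF _)).
Qed.

End Cont.

Theorem theorem3p1 (R : realType) (V : completeNormedModType R)
  (mul : V -> V -> V) (F d : V -> V) (H1 H2 : set V) :
  banach_algebra_mul mul ->
  prime_alg mul ->
  open H1 -> open H2 -> H1 !=set0 -> H2 !=set0 ->
  is_derivation mul d ->
  is_gen_derivation mul F d ->
  continuous F ->
  ~ injective d ->
  (forall x y, H1 x -> H2 y ->
     exists p q : nat, (0 < p)%N /\ (0 < q)%N /\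
       alg_center mul (F (mul (apow mul x p) (apow mul y q))
                   + jordan mul (apow mul x p) (apow mul y q))) ->
  (forall x y, mul x y = mul y x) \/ (forall z, alg_center mul z -> d z = 0).
Proof.
move=> BA PR oH1 oH2 nH1 nH2 HD HF cF _ Hcov.
case: (pselect (forall z, alg_center mul z -> d z = 0)) => [h|h]; [by right|left].
have [z [Hz dz0]] : exists z, alg_center mul z /\ d z <> 0.
  apply: contrapT => hn; apply: h => z Hz; apply: contrapT => dz; apply: hn; by exists z.
have [x0 [y0 [e [p [q [e0 [p0 [q0 HG]]]]]]]] :=
  baire_step (Gf := G mul F) (Zc_closed BA) (fun p q => @cont_G R V mul F BA p q cF) oH1 oH2 nH1 nH2 Hcov.
exact: (main_alg BA PR HD HF e0 p0 q0 Hz dz0 HG).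
Qed.
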